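(* The functional $\delta$ defines a finite metric on $\mathrm{Conv}_{\mathrm{coe}}(\mathbb{R}^n)$. Furthermore, $\delta(u,v)=\delta(u(\cdot-x_0)+t_0,\,v(\cdot-x_0)+t_0)$ for every $u,v\in\mathrm{Conv}_{\mathrm{coe}}(\mathbb{R}^n)$, $x_0\in\mathbb{R}^n$ and $t_0\in\mathbb{R}$.
   Context: $\mathrm{Conv}_{\mathrm{coe}}(\mathbb{R}^n)$ is the set of proper, lower semicontinuous, convex, coercive functions $u:\mathbb{R}^n\to\mathbb{R}\cup\{+\infty\}$. $u^*(y)=\sup_x(\langle x,y\rangle-u(x))$ is the convex conjugate. For $\lambda>0$, $\|u^*-v^*\|_{\infty,\frac1\lambda B^n}=\sup_{|x|\le1/\lambda}|u^*(x)-v^*(x)|$. Define $\delta(u,v)=\inf\{\lambda>0:\|u^*-v^*\|_{\infty,\frac1\lambda B^n}\le\lambda\}$; equivalently $\delta(u,v)=\inf\{\lambda>0: u\ge v\,\Box\,(n_\lambda-\lambda)\text{ and }v\ge u\,\Box\,(n_\lambda-\lambda)\}$ where $n_\lambda(x)=|x|/\lambda$ and $\Box$ is infimal convolution. *)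

(* Defs.v *)
From HB Require Import structures.
From mathcomp Require Import all_boot all_order all_algebra.
From mathcomp Require Import boolp classical_sets reals constructive_ereal ereal.
Set Implicit Arguments. Unset Strict Implicit. Unset Printing Implicit Defensive.
Import Order.TTheory GRing.Theory Num.Theory.
Local Open Scope ring_scope.
Local Open Scope classical_set_scope.

Section Defs.
Variables (R : realType) (n : nat).

Definition dotv (x y : 'rV[R]_n) : R := \sum_(i < n) x ord0 i * y ord0 i.
Definition enorm (x : 'rV[R]_n) : R := Num.sqrt (dotv x x).

Definition proper_fun (u : 'rV[R]_n -> \bar R) : Prop :=
  (forall x, u x != -oo%E) /\ (exists x, u x != +oo%E).

Definition lsc (u : 'rV[R]_n -> \bar R) : Prop :=
  forall x (t : R), (t%:E < u x)%E ->
    exists2 e : R, 0 < e & forall y, enorm (y - x) < e -> (t%:E < u y)%E.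

Definition convex_fun (u : 'rV[R]_n -> \bar R) : Prop :=
  forall (x y : 'rV[R]_n) (l : R), 0 <= l -> l <= 1 ->
    (u (l *: x + (1 - l) *: y)%R <= l%:E * u x + (1 - l)%:E * u y)%E.

Definition coercive (u : 'rV[R]_n -> \bar R) : Prop :=
  forall M : R, exists r : R, forall x, r < enorm x -> (M%:E < u x)%E.

Definition Conv_coe (u : 'rV[R]_n -> \bar R) : Prop :=
  proper_fun u /\ lsc u /\ convex_fun u /\ coercive u.

Definition conj_fun (u : 'rV[R]_n -> \bar R) (y : 'rV[R]_n) : \bar R :=
  ereal_sup [set ((dotv x y)%:E - u x)%E | x in [set: 'rV[R]_n]].

(* ||u^* - v^*||_{oo, (1/l) B^n} <= l, with values in (-oo,+oo]
   (points where both conjugates are +oo contribute 0) *)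
Definition delta_cond (u v : 'rV[R]_n -> \bar R) (l : R) : Prop :=
  forall y, enorm y <= l^-1 ->
    (conj_fun u y <= conj_fun v y + l%:E)%E /\
    (conj_fun v y <= conj_fun u y + l%:E)%E.

Definition delta (u v : 'rV[R]_n -> \bar R) : R :=
  inf [set l : R | 0 < l /\ delta_cond u v l].

Definition transl (u : 'rV[R]_n -> \bar R) (x0 : 'rV[R]_n) (t0 : R) :=
  fun x : 'rV[R]_n => (u (x - x0)%R + t0%:E)%E.

End Defs.

(* Main.v *)
Require Import Defs.
From HB Require Import structures.
From mathcomp Require Import all_boot all_order all_algebra.
From mathcomp Require Import boolp classical_sets reals constructive_ereal ereal.
From mathcomp Require Import ring lra.
Import Order.TTheory GRing.Theory Num.Theory.
Local Open Scope ring_scope.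
Local Open Scope classical_set_scope.
Set Implicit Arguments. Unset Strict Implicit. Unset Printing Implicit Defensive.



Section Eucl.
Context (R : realType) (n : nat).
Implicit Types x y z : 'rV[R]_n.

Lemma dotvC x y : dotv x y = dotv y x.
Proof. by apply: eq_bigr => i _; rewrite mulrC. Qed.

Lemma dotvDl x y z : dotv (x + y) z = dotv x z + dotv y z.
Proof. by rewrite /dotv -big_split; apply: eq_bigr => i _; rewrite !mxE mulrDl. Qed.

Lemma dotvZl (c : R) x y : dotv (c *: x) y = c * dotv x y.
Proof. by rewrite /dotv mulr_sumr; apply: eq_bigr => i _; rewrite !mxE mulrA. Qed.

Lemma dotvNl x y : dotv (- x) y = - dotv x y.
Proof. by rewrite -scaleN1r dotvZl mulN1r. Qed.

Lemma dotvBl x y z : dotv (x - y) z = dotv x z - dotv y z.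
Proof. by rewrite dotvDl dotvNl. Qed.

Lemma dotvDr x y z : dotv z (x + y) = dotv z x + dotv z y.
Proof. by rewrite dotvC dotvDl !(dotvC z). Qed.
Lemma dotvZr (c : R) x y : dotv y (c *: x) = c * dotv y x.
Proof. by rewrite dotvC dotvZl dotvC. Qed.
Lemma dotvBr x y z : dotv z (x - y) = dotv z x - dotv z y.
Proof. by rewrite dotvC dotvBl !(dotvC z). Qed.

Lemma dotv0l y : dotv 0 y = 0.
Proof. by rewrite /dotv big1 // => i _; rewrite mxE mul0r. Qed.
Lemma dotv0r y : dotv y 0 = 0.
Proof. by rewrite dotvC dotv0l. Qed.

Lemma dotvxx_ge0 x : 0 <= dotv x x.
Proof. by apply: sumr_ge0 => i _; rewrite -expr2 sqr_ge0. Qed.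

Lemma dotvxx_eq0 x : dotv x x = 0 -> x = 0.
Proof.
move=> /eqP; rewrite psumr_eq0; last by move=> i _; rewrite -expr2 sqr_ge0.
move=> /allP H; apply/rowP => j; rewrite mxE.
by have := H j (mem_index_enum j); rewrite -expr2 sqrf_eq0 => /eqP.
Qed.

Lemma enorm_ge0 x : 0 <= enorm x.
Proof. exact: sqrtr_ge0. Qed.

Lemma enorm_sq x : enorm x ^+ 2 = dotv x x.
Proof. by rewrite /enorm sqr_sqrtr // dotvxx_ge0. Qed.

Lemma CS x y : dotv x y ^+ 2 <= dotv x x * dotv y y.
Proof.
have [y0|ny0] := eqVneq (dotv y y) 0.
  by rewrite y0 (dotvxx_eq0 y0) dotv0r expr0n /= mulr0.
have yp : 0 < dotv y y by rewrite lt_def ny0 dotvxx_ge0.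
set t := dotv x y / dotv y y.
have E : dotv (x - t *: y) (x - t *: y) = dotv x x - 2 * t * dotv x y + t ^+ 2 * dotv y y.
  by rewrite !(dotvBl, dotvBr, dotvZl, dotvZr) (dotvC y x); ring.
have := dotvxx_ge0 (x - t *: y); rewrite E => H.
have := mulr_ge0 (ltW yp) H.
rewrite /t; set a := dotv x x; set b := dotv x y; set c := dotv y y => H2.
have E2 : c * (a - 2 * (b / c) * b + (b / c) ^+ 2 * c) = a * c - b ^+ 2.
  by field; rewrite ny0.
rewrite E2 in H2; by rewrite -subr_ge0.
Qed.

Lemma CS' x y : dotv x y <= enorm x * enorm y.
Proof.
have h : `|dotv x y| <= enorm x * enorm y.
  rewrite -(ler_pXn2r (n := 2)) ?nnegrE ?mulr_ge0 ?enorm_ge0 //.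
  by rewrite exprMn !enorm_sq real_normK ?num_real // CS.
exact: le_trans (ler_norm _) h.
Qed.

Lemma enormD x y : enorm (x + y) <= enorm x + enorm y.
Proof.
rewrite -(ler_pXn2r (n := 2)) ?nnegrE ?addr_ge0 ?enorm_ge0 //.
rewrite enorm_sq !(dotvDl, dotvDr) sqrrD !enorm_sq (dotvC y x).
have := CS' x y; lra.
Qed.

Lemma enormZ (c : R) x : enorm (c *: x) = `|c| * enorm x.
Proof.
rewrite /enorm dotvZl dotvZr mulrA -expr2 -real_normK ?num_real //.
by rewrite sqrtrM ?sqr_ge0 // sqrtr_sqr normr_id.
Qed.

Lemma enormN x : enorm (- x) = enorm x.
Proof. by rewrite -scaleN1r enormZ normrN1 mul1r. Qed.

Lemma enormB x y : enorm (x - y) = enorm (y - x).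
Proof. by rewrite -enormN opprB. Qed.

Lemma enorm0 : enorm (0 : 'rV[R]_n) = 0.
Proof. by rewrite /enorm dotv0l sqrtr0. Qed.

Lemma enormDB x y z : enorm (x - z) <= enorm (x - y) + enorm (y - z).
Proof. by have := enormD (x - y) (y - z); rewrite addrA subrK. Qed.

End Eucl.



Section Core.
Context (R : realType) (n : nat) (g : 'rV[R]_n -> R).
Hypothesis hconv : forall x x' (l : R), 0 < l -> l < 1 ->
  g (l *: x + (1 - l) *: x') <= l * g x + (1 - l) * g x'.
Context (x0 : 'rV[R]_n).

Definition Vk (k : nat) (v : 'rV[R]_n) := forall j : 'I_n, (k <= j)%N -> v ord0 j = 0.

Lemma core_step k (hk : (k < n)%N) y : Vk k y ->
  (forall v, Vk k v -> g x0 + dotv v y <= g (x0 + v)) ->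
  exists y', Vk k.+1 y' /\ (forall v, Vk k.+1 v -> g x0 + dotv v y' <= g (x0 + v)).
Proof.
move=> Vy IH.
pose kk := Ordinal hk.
pose e : 'rV[R]_n := \row_j ((j == kk)%:R).
have dve v : dotv v e = v ord0 kk.
  rewrite /dotv (bigD1 kk) //= big1 ?addr0; first by rewrite mxE eqxx mulr1.
  by move=> j /negbTE hj; rewrite mxE hj mulr0.
have dev v : dotv e v = v ord0 kk by rewrite dotvC dve.
have Vkk v : Vk k v -> v ord0 kk = 0 by move=> /(_ kk); apply.
pose p v s := (g (x0 + v + s *: e) - g x0 - dotv v y) / s.
pose S := [set c | exists v s, [/\ Vk k v, 0 < s &
             c = (g x0 + dotv v y - g (x0 + v - s *: e)) / s]].
have key : forall v1 s1, Vk k v1 -> 0 < s1 -> forall c, S c -> c <= p v1 s1.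
  move=> v1 s1 V1 s1p c [v2 [s2 [V2 s2p ->]]].
  pose l := s2 / (s1 + s2).
  have s12 : s1 + s2 != 0 by rewrite gt_eqF // addr_gt0.
  have lp : 0 < l by rewrite divr_gt0 // addr_gt0.
  have l1 : l < 1 by rewrite /l ltr_pdivrMr ?addr_gt0 // mul1r ltrDr.
  pose w := l *: v1 + (1 - l) *: v2.
  have Vw : Vk k w by move=> j hj; rewrite !mxE V1 // V2 // !mulr0 addr0.
  have Ew : l *: (x0 + v1 + s1 *: e) + (1 - l) *: (x0 + v2 - s2 *: e) = x0 + w.
    apply/rowP => j; rewrite !mxE /l; field; exact: s12.
  have H1 := IH w Vw.
  have H2 := hconv (x0 + v1 + s1 *: e) (x0 + v2 - s2 *: e) lp l1.
  rewrite Ew in H2.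
  have Edw : dotv w y = l * dotv v1 y + (1 - l) * dotv v2 y.
    by rewrite /w dotvDl !dotvZl.
  have hl : l * (s1 + s2) = s2 by rewrite /l mulfVK.
  rewrite /p ler_pdivlMr // mulrAC ler_pdivrMr //.
  move: H1 H2; rewrite Edw.
  set ga := g (x0 + v1 + s1 *: e); set gb := g (x0 + v2 - s2 *: e).
  set g0 := g x0; set d1 := dotv v1 y; set d2 := dotv v2 y; set gw := g (x0 + w).
  move=> H1 H2.
  have H : g0 + l * d1 + (1 - l) * d2 <= l * ga + (1 - l) * gb.
    by apply: le_trans H2; rewrite -addrA.
  have s12p : 0 < s1 + s2 by rewrite addr_gt0.
  have HH := ler_wpM2l (ltW s12p) H.
  have E1 : (s1 + s2) * (g0 + l * d1 + (1 - l) * d2) = (s1 + s2) * g0 + (l * (s1 + s2)) * d1 + (s1 + s2 - l * (s1 + s2)) * d2 by ring.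
  have E2 : (s1 + s2) * (l * ga + (1 - l) * gb) = (l * (s1 + s2)) * ga + (s1 + s2 - l * (s1 + s2)) * gb by ring.
  rewrite E1 E2 hl in HH.
  nra.
have V0 : Vk k 0 by move=> j _; rewrite mxE.
have Sne : S !=set0.
  by exists ((g x0 + dotv 0 y - g (x0 + 0 - 1 *: e)) / 1), 0, 1; split.
have hsup : has_sup S by split => //; exists (p 0 1) => c' Sc; exact: key.
pose c := sup S.
have cub : forall c', S c' -> c' <= c by move=> c' Sc'; exact: sup_upper_bound.
have clb : forall v1 s1, Vk k v1 -> 0 < s1 -> c <= p v1 s1.
  by move=> v1 s1 V1 s1p; apply: ge_sup => // c' Sc'; exact: key.
exists (y + c *: e); split.
  move=> j hj; rewrite !mxE Vy ?(ltnW hj) //.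
  have -> : (j == kk) = false by apply/negbTE; apply/eqP => ejk; move: hj; rewrite ejk /= ltnn.
  by rewrite mulr0 addr0.
move=> v Vv.
pose s := v ord0 kk.
pose w := v - s *: e.
have Vw : Vk k w.
  move=> j hj; rewrite !mxE /s.
  have [ejk|njk] := eqVneq j kk; first by rewrite ejk mulr1 subrr.
  rewrite mulr0 subr0 Vv //.
  by rewrite ltn_neqAle hj andbT; apply: contra njk => /eqP ejk; apply/eqP/val_inj.
have Ev : v = w + s *: e by rewrite subrK.
have Ed : dotv v (y + c *: e) = dotv w y + s * c.
  rewrite Ev dotvDl !dotvDr !dotvZl !dotvZr dve dev (Vkk _ Vw) (Vkk _ Vy) dve.
  by rewrite mxE eqxx mulr1 !mulr0 addr0 add0r.
rewrite Ed.
have [sp|sn|s0] := ltgtP s 0.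
- have Sel : S ((g x0 + dotv w y - g (x0 + w - (- s) *: e)) / (- s)).
    by exists w, (- s); split => //; rewrite oppr_gt0.
  have := cub _ Sel; rewrite ler_pdivrMr ?oppr_gt0 // scaleNr opprK -(addrA x0) -Ev.
  lra.
- have := clb w s Vw sn; rewrite /p -(addrA x0) -Ev ler_pdivlMr //.
  lra.
- have Evw : v = w by rewrite /w s0 scale0r subr0.
  rewrite s0 mul0r addr0 -Evw; apply: IH; by rewrite -Evw in Vw.
Qed.

Lemma core : exists y, forall x, g x0 + dotv (x - x0) y <= g x.
Proof.
suff : forall k, (k <= n)%N -> exists y, Vk k y /\
   (forall v, Vk k v -> g x0 + dotv v y <= g (x0 + v)).
  move=> /(_ n (leqnn n)) [y [_ H]]; exists y => x.
  have := H (x - x0); rewrite (addrC x0) subrK; apply.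
  by move=> j hj; have := ltn_ord j; rewrite ltnNge hj.
elim => [_|k IHk hk].
  exists 0; split; first by move=> j _; rewrite mxE.
  move=> v Vv; have -> : v = 0 by apply/rowP => j; rewrite mxE; apply: Vv.
  by rewrite dotv0l addr0 addr0.
have [y [Vy Hy]] := IHk (ltnW hk).
by have := core_step hk Vy Hy.
Qed.

End Core.



Section Cv.
Context (R : realType) (n : nat).
Implicit Types (u : 'rV[R]_n -> \bar R) (x y z : 'rV[R]_n).

Lemma conv_fin u x x' (a b l : R) : convex_fun u -> u x = a%:E -> u x' = b%:E ->
  0 <= l -> l <= 1 -> (u (l *: x + (1 - l) *: x')%R <= (l * a + (1 - l) * b)%:E)%E.
Proof. by move=> H ux ux' l0 l1; have := H x x' l l0 l1; rewrite ux ux'. Qed.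

Lemma comb_sub x x1 (l : R) : l *: x + (1 - l) *: x1 - x1 = l *: (x - x1).
Proof. by apply/rowP => j; rewrite !mxE; ring. Qed.

Lemma cone_lb u x1 (a : R) : proper_fun u -> lsc u -> convex_fun u -> u x1 = a%:E ->
  exists K B : R, 0 <= K /\ forall x, (((- B) - K * enorm (x - x1))%:E <= u x)%E.
Proof.
move=> [pr _] hl hc ux1.
have h0 : ((a - 1)%:E < u x1)%E by rewrite ux1 lte_fin; lra.
have [d dp hd] := hl x1 (a - 1) h0.
exists (2 / d), (1 - a); split; first by rewrite divr_ge0 // ltW.
move=> x; case Hx: (u x) => [r| |]; last 2 first.
- exact: leey.
- by have := pr x; rewrite Hx.
rewrite lee_fin; set D := enorm (x - x1).
have D0 : 0 <= D := enorm_ge0 _.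
have KD : 0 <= 2 / d * D by rewrite mulr_ge0 // divr_ge0 // ltW.
have [Dd|dD] := ltP D d.
  have := hd x Dd; rewrite Hx lte_fin; lra.
have Dp : 0 < D by apply: lt_le_trans dD.
pose th := d / (2 * D).
have thp : 0 < th by rewrite divr_gt0 // mulr_gt0.
have th1 : th <= 1.
  by rewrite /th ler_pdivrMr ?mulr_gt0 // mul1r; lra.
have Ez := comb_sub x x1 th.
have nz : enorm (th *: x + (1 - th) *: x1 - x1) < d.
  rewrite Ez enormZ ger0_norm ?ltW // -/D.
  have -> : th * D = d / 2 by rewrite /th; field; rewrite gt_eqF.
  lra.
have := hd _ nz.
have := conv_fin hc Hx ux1 (ltW thp) th1.
move=> h1 h2; have := lt_le_trans h2 h1; rewrite lte_fin => h3.
have Eth : th * (2 / d * D) = 1 by rewrite /th; field; rewrite !gt_eqF.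
nra.
Qed.

Lemma growth u x1 (a : R) : proper_fun u -> convex_fun u -> coercive u -> u x1 = a%:E ->
  exists rho : R, 0 < rho /\ forall x, rho <= enorm (x - x1) ->
    ((a + enorm (x - x1) / rho)%:E <= u x)%E.
Proof.
move=> [pr _] hc hco ux1.
have [r hr] := hco (a + 1).
pose rho := `|r| + enorm x1 + 1.
have rhop : 0 < rho by rewrite /rho; have := enorm_ge0 x1; have := normr_ge0 r; lra.
exists rho; split => // x; set D := enorm (x - x1) => rD.
case Hx: (u x) => [rr| |]; last 2 first.
- exact: leey.
- by have := pr x; rewrite Hx.
rewrite lee_fin.
have Dp : 0 < D by apply: lt_le_trans rD.
pose th := rho / D.
have thp : 0 < th by rewrite divr_gt0.
have th1 : th <= 1 by rewrite /th ler_pdivrMr // mul1r.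
have Ez := comb_sub x x1 th.
have nz : enorm (th *: x + (1 - th) *: x1 - x1) = rho.
  by rewrite Ez enormZ ger0_norm ?ltW // /th -/D divfK ?gt_eqF.
have big : r < enorm (th *: x + (1 - th) *: x1).
  have := enormD (th *: x + (1 - th) *: x1) (- x1); rewrite enormN nz.
  have := ler_norm r; rewrite /rho; lra.
have := hr _ big.
have := conv_fin hc Hx ux1 (ltW thp) th1.
move=> h1 h2; have := lt_le_trans h2 h1; rewrite lte_fin => h3.
have Eth : th * (D / rho) = 1 by rewrite /th; field; rewrite !gt_eqF.
have : 0 < D / rho by rewrite divr_gt0.
nra.
Qed.

End Cv.



Section Bd.
Context (R : realType) (n : nat).
Implicit Types (u : 'rV[R]_n -> \bar R) (x y z : 'rV[R]_n).

Lemma conj_ge u x y : ((dotv x y)%:E - u x <= conj_fun u y)%E.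
Proof. by apply: ereal_sup_ubound; exists x. Qed.

Lemma proper_fin u : proper_fun u -> exists x1 (a : R), u x1 = a%:E.
Proof.
move=> [pr [x1 hx1]]; exists x1; case Hx: (u x1) => [a| |].
- by exists a.
- by rewrite Hx in hx1.
- by have := pr x1; rewrite Hx.
Qed.

Lemma lin_lb u : Conv_coe u -> exists x1 (a C rho : R), [/\ u x1 = a%:E, 0 <= C, 0 < rho &
  forall x, ((enorm (x - x1) / rho - C)%:E <= u x)%E].
Proof.
move=> [hp [hl [hc hco]]].
have [x1 [a ux1]] := proper_fin hp.
have [K [B [K0 hKB]]] := cone_lb hp hl hc ux1.
have [rho [rhop hg]] := growth hp hc hco ux1.
exists x1, a, (`|B| + K * rho + 1 + `|a|), rho; split => //.
  by have := normr_ge0 B; have := normr_ge0 a; have := mulr_ge0 K0 (ltW rhop); lra.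
move=> x; set D := enorm (x - x1).
have D0 : 0 <= D := enorm_ge0 _.
have [Dr|rD] := ltP D rho.
  apply: le_trans (hKB x); rewrite lee_fin -/D.
  have h1 : D / rho <= 1 by rewrite ler_pdivrMr // mul1r ltW.
  have h2 : K * D <= K * rho by rewrite ler_wpM2l // ltW.
  have := ler_norm B; have := normr_ge0 a; have := ler_norm (- B); rewrite normrN; lra.
apply: le_trans (hg x rD); rewrite lee_fin -/D.
have := ler_norm (- a); rewrite normrN; have := normr_ge0 B; have := mulr_ge0 K0 (ltW rhop); lra.
Qed.

Lemma bound u : Conv_coe u -> exists r M : R, 0 < r /\ forall y, enorm y <= r ->
  ((- M)%:E <= conj_fun u y /\ conj_fun u y <= M%:E)%E.
Proof.
move=> hu; have [x1 [a [C [rho [ux1 C0 rhop hlb]]]]] := lin_lb hu.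
have e0 := enorm_ge0 x1.
exists rho^-1, (enorm x1 / rho + C + `|a|); split; first by rewrite invr_gt0.
move=> y hy.
have hy' : enorm x1 * enorm y <= enorm x1 / rho by rewrite ler_wpM2l.
split.
  apply: le_trans (conj_ge u x1 y); rewrite ux1 -EFinB lee_fin.
  have := CS' (- x1) y; rewrite dotvNl enormN.
  have := ler_norm a; lra.
apply: ge_ereal_sup => _ [x _ <-].
case Hx: (u x) => [r| |]; last 2 first.
- by rewrite /= leNye.
- by case: hu => [[pr _] _]; have := pr x; rewrite Hx.
rewrite -EFinB lee_fin.
have := hlb x; rewrite Hx lee_fin => h1.
have Ed : dotv x y = dotv (x - x1) y + dotv x1 y by rewrite dotvBl subrK.
have h2 := CS' (x - x1) y.
have h3 : enorm (x - x1) * enorm y <= enorm (x - x1) / rho by rewrite ler_wpM2l ?enorm_ge0.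
have h4 := CS' x1 y.
have := normr_ge0 a; lra.
Qed.

End Bd.



Lemma inf_comb (R : realType) (A B : set R) (c l m : R) : A !=set0 -> B !=set0 ->
  0 < l -> 0 < m -> (forall a b, A a -> B b -> c <= l * a + m * b) ->
  c <= l * inf A + m * inf B.
Proof.
move=> An Bn lp mp H.
have h1 : forall b, B b -> (c - m * b) / l <= inf A.
  move=> b Bb; apply: lb_le_inf => // a Aa.
  by rewrite ler_pdivrMr // mulrC; have := H a b Aa Bb; lra.
have h2 : (c - l * inf A) / m <= inf B.
  apply: lb_le_inf => // b Bb; rewrite ler_pdivrMr // mulrC.
  by have := h1 b Bb; rewrite ler_pdivrMr // mulrC; lra.
by move: h2; rewrite ler_pdivrMr // mulrC; lra.
Qed.

Section FMs.
Context (R : realType) (n : nat).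
Implicit Types (u : 'rV[R]_n -> \bar R) (x y z : 'rV[R]_n).

Lemma FM u x0 (t : R) : Conv_coe u -> (t%:E < u x0)%E ->
  exists y (rr : R), (conj_fun u y <= rr%:E)%E /\ t < dotv x0 y - rr.
Proof.
move=> hu ht.
have hu' := hu; case: hu' => [hp [hl [hc hco]]].
have pr := hp.1.
have finE x : u x != +oo%E -> u x = (fine (u x))%:E.
  by move=> h; rewrite fineK // fin_numE h andbT; apply: pr.
have [x1 [a ux1]] := proper_fin hp.
have [K [B [K0 hKB]]] := cone_lb hp hl hc ux1.
have [t' [tt' ht']] : exists t' : R, t < t' /\ (t'%:E < u x0)%E.
  case Hx: (u x0) ht => [b| |] ht.
  - exists ((t + b) / 2)%R; move: ht; rewrite !lte_fin => ht; split; lra.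
  - by exists (t + 1)%R; split; [lra | rewrite ltey].
  - by have := pr x0; rewrite Hx.
have [eps epsp heps] := hl x0 t' ht'.
set D := enorm (x0 - x1).
pose k := K + (`|t' + B + K * D| + 1) / eps.
have kK : K <= k by rewrite /k lerDl divr_ge0 // ?ltW // addr_ge0.
have k0 : 0 <= k by apply: le_trans kK.
pose dom := [set z | u z != +oo%E].
pose S x := [set fine (u z) + k * enorm (x - z) | z in dom].
pose g x := inf (S x).
have domx1 : dom x1 by rewrite /dom /= ux1.
have Sne x : S x !=set0 by exists (fine (u x1) + k * enorm (x - x1)), x1.
have fu_lb z : dom z -> - B - K * enorm (z - x1) <= fine (u z).
  by move=> dz; have := hKB z; rewrite (finE z dz) lee_fin.
have Slb x : has_lbound (S x).
  exists (- B - K * enorm (x - x1)) => _ [z dz <-].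
  have := fu_lb z dz; have := enormDB z x x1; rewrite (enormB z x) => h1 h2.
  have : K * enorm (z - x1) <= K * (enorm (x - z) + enorm (x - x1)).
    by rewrite ler_wpM2l.
  have : K * enorm (x - z) <= k * enorm (x - z) by rewrite ler_wpM2r ?enorm_ge0.
  lra.
have g_le x : dom x -> g x <= fine (u x).
  move=> dx; have h := ge_inf (Slb x).
  have := h (fine (u x) + k * enorm (x - x)) (ex_intro2 _ _ x dx erefl).
  by rewrite subrr enorm0 mulr0 addr0.
have g_x0 : t' <= g x0.
  apply: lb_le_inf => // _ [z dz <-].
  have [zn|nz] := ltP (enorm (z - x0)) eps.
    have := heps z zn; rewrite (finE z dz) lte_fin => h.
    by have := mulr_ge0 k0 (enorm_ge0 (x0 - z)); lra.
  have h1 := fu_lb z dz.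
  have h2 := enormDB z x0 x1; rewrite -/D in h2.
  have h3 : K * enorm (z - x1) <= K * (enorm (z - x0) + D) by rewrite ler_wpM2l.
  rewrite (enormB x0 z).
  have h4 : (`|t' + B + K * D| + 1) <= (k - K) * enorm (z - x0).
    have -> : k - K = (`|t' + B + K * D| + 1) / eps by rewrite /k; ring.
    by rewrite mulrAC ler_pdivlMr // ler_wpM2l // addr_ge0.
  have h5 := ler_norm (t' + B + K * D).
  have e : k * enorm (z - x0) = K * enorm (z - x0) + (k - K) * enorm (z - x0) by ring.
  lra.
have gconv : forall x x' (l : R), 0 < l -> l < 1 ->
    g (l *: x + (1 - l) *: x') <= l * g x + (1 - l) * g x'.
  move=> x x' l lp l1; apply: inf_comb => //; first by lra.
  move=> _ _ [z dz <-] [z' dz' <-].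
  set w := l *: z + (1 - l) *: z'.
  have hw := conv_fin hc (finE z dz) (finE z' dz') (ltW lp) (ltW l1).
  have dw : dom w by rewrite /dom /=; apply: contraTneq hw => ->.
  rewrite -/w (finE w dw) lee_fin in hw.
  have Ew : l *: x + (1 - l) *: x' - w = l *: (x - z) + (1 - l) *: (x' - z').
    by apply/rowP => j; rewrite !mxE; ring.
  have hn : enorm (l *: x + (1 - l) *: x' - w) <= l * enorm (x - z) + (1 - l) * enorm (x' - z').
    rewrite Ew; apply: le_trans (enormD _ _) _.
    by rewrite !enormZ !ger0_norm //; lra.
  have := ge_inf (Slb (l *: x + (1 - l) *: x')).
  move=> /(_ (fine (u w) + k * enorm (l *: x + (1 - l) *: x' - w))) h.
  have := h (ex_intro2 _ _ w dw erefl) => hg.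
  have := ler_wpM2l k0 hn.
  rewrite /g; lra.
have [y hy] := core gconv x0.
exists y, (dotv x0 y - g x0); split; last by lra.
apply: ge_ereal_sup => _ [x _ <-].
case Hx: (u x) => [r| |]; last 2 first.
- by rewrite /= leNye.
- by have := pr x; rewrite Hx.
have dx : dom x by rewrite /dom /= Hx.
have := g_le x dx; rewrite Hx /= => h1.
have := hy x; rewrite dotvBl => h2.
by rewrite -EFinB lee_fin; lra.
Qed.

End FMs.



Lemma inv_le (R : realType) (a b : R) : 0 < a -> a <= b -> b^-1 <= a^-1.
Proof.
move=> ap ab; have bp : 0 < b by apply: lt_le_trans ab.
by rewrite lef_pV2 ?posrE.
Qed.

Section Main.
Context (R : realType) (n : nat).
Implicit Types (u v w : 'rV[R]_n -> \bar R) (x y z : 'rV[R]_n).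

Lemma dc_mono u v (a b : R) : 0 < a -> a <= b -> delta_cond u v a -> delta_cond u v b.
Proof.
move=> ap ab H y hy.
have [h1 h2] := H y (le_trans hy (inv_le ap ab)).
split.
  by apply: le_trans h1 _; apply: leeD2l; rewrite lee_fin.
by apply: le_trans h2 _; apply: leeD2l; rewrite lee_fin.
Qed.

Lemma dc_sym u v l : delta_cond u v l -> delta_cond v u l.
Proof. by move=> H y hy; have [h1 h2] := H y hy. Qed.

Lemma dc_trans u v w (a b : R) : 0 < a -> 0 < b ->
  delta_cond u v a -> delta_cond v w b -> delta_cond u w (a + b).
Proof.
move=> ap bp H1 H2 y hy.
have ha : enorm y <= a^-1 by apply: le_trans hy (inv_le ap _); lra.
have hb : enorm y <= b^-1 by apply: le_trans hy (inv_le bp _); lra.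
have [h1 h1'] := H1 y ha; have [h2 h2'] := H2 y hb.
split.
  apply: le_trans h1 _.
  apply: le_trans (leeD2r a%:E h2) _.
  by rewrite -addeA -EFinD (addrC b).
apply: le_trans h2' _.
apply: le_trans (leeD2r b%:E h1') _.
by rewrite -addeA -EFinD.
Qed.

Lemma finiteness u v : Conv_coe u -> Conv_coe v -> exists l : R, 0 < l /\ delta_cond u v l.
Proof.
move=> hu hv.
have [ru [Mu [rup hMu]]] := bound hu.
have [rv [Mv [rvp hMv]]] := bound hv.
pose l := Num.max (Num.max ru^-1 rv^-1) (Mu + Mv).
have l1 : ru^-1 <= l by rewrite /l !le_max lexx.
have l2 : rv^-1 <= l by rewrite /l !le_max lexx orbT.
have l3 : Mu + Mv <= l by rewrite /l !le_max lexx orbT.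
have lp : 0 < l by apply: lt_le_trans l1; rewrite invr_gt0.
exists l; split => // y hy.
have hu' : enorm y <= ru by apply: le_trans hy _; rewrite -[ru]invrK; apply: inv_le; rewrite ?invr_gt0.
have hv' : enorm y <= rv by apply: le_trans hy _; rewrite -[rv]invrK; apply: inv_le; rewrite ?invr_gt0.
have [a1 a2] := hMu y hu'; have [b1 b2] := hMv y hv'.
split.
  apply: le_trans a2 _; apply: le_trans (leeD2r l%:E b1); rewrite -EFinD lee_fin; lra.
apply: le_trans b2 _; apply: le_trans (leeD2r l%:E a1); rewrite -EFinD lee_fin; lra.
Qed.

Lemma all_dc u v : Conv_coe u -> Conv_coe v -> delta u v = 0 ->
  forall l, 0 < l -> delta_cond u v l.
Proof.
move=> hu hv d0 l lp.
have [l0 [l0p H0]] := finiteness hu hv.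
have hinf : has_inf [set l : R | 0 < l /\ delta_cond u v l].
  split; first by exists l0.
  by exists 0 => e [ep _]; apply: ltW.
have [e [ep He] elt] := inf_adherent lp hinf.
rewrite -/(delta u v) d0 add0r in elt.
exact: dc_mono ep (ltW elt) He.
Qed.

Lemma not_lt u v x0 : Conv_coe u -> Conv_coe v ->
  (forall l, 0 < l -> delta_cond u v l) -> ~ (v x0 < u x0)%E.
Proof.
move=> hu hv H hlt.
have prv := hv.1.1.
case Hv: (v x0) hlt => [b| |] hlt; last 2 first.
- by rewrite ltNge leey in hlt.
- by have := prv x0; rewrite Hv.
have [t [bt ht]] : exists t : R, b < t /\ (t%:E < u x0)%E.
  case Hx: (u x0) hlt => [c| |] hlt.
  - by exists ((b + c) / 2)%R; move: hlt; rewrite !lte_fin => hlt; split; lra.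
  - by exists (b + 1)%R; split; [lra | rewrite ltey].
  - by rewrite ltNge leNye in hlt.
have [y [rr [hc ht2]]] := FM hu ht.
have [gap [gE gp]] : exists g : R, g = dotv x0 y - rr - t /\ 0 < g.
  by exists (dotv x0 y - rr - t); split => //; lra.
have [l lE] : exists l : R, l = (enorm y + 1 + gap^-1)^-1 by eexists.
have ey := enorm_ge0 y.
have gi : 0 < gap^-1 by rewrite invr_gt0.
have lp : 0 < l by rewrite lE invr_gt0; lra.
have hy : enorm y <= l^-1 by rewrite lE invrK; lra.
have lg : l <= gap by rewrite lE -[gap]invrK; apply: inv_le => //; lra.
have [_ h2] := H l lp y hy.
have h3 := conj_ge v x0 y; rewrite Hv in h3.
have := le_trans h3 (le_trans h2 (leeD2r l%:E hc)).
rewrite -EFinB -EFinD lee_fin; lra.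
Qed.

Lemma conj_transl u (x0 : 'rV[R]_n) (t0 : R) y : proper_fun u ->
  conj_fun (transl u x0 t0) y = (conj_fun u y + (dotv x0 y - t0)%:E)%E.
Proof.
move=> [pr _]; apply/le_anti/andP; split.
  apply: ge_ereal_sup => _ [x _ <-]; rewrite /transl.
  case Hx: (u (x - x0)) => [r| |]; last 2 first.
  - by rewrite /= leNye.
  - by have := pr (x - x0); rewrite Hx.
  apply: le_trans (leeD2r _ (conj_ge u (x - x0) y)).
  by rewrite Hx -EFinD -!EFinB -EFinD lee_fin dotvBl; lra.
have h : (conj_fun u y <= conj_fun (transl u x0 t0) y + (- (dotv x0 y - t0))%:E)%E.
  apply: ge_ereal_sup => _ [z _ <-].
  case Hz: (u z) => [r| |]; last 2 first.
  - by rewrite /= leNye.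
  - by have := pr z; rewrite Hz.
  apply: le_trans (leeD2r _ (conj_ge (transl u x0 t0) (z + x0) y)).
  by rewrite /transl addrK Hz -EFinD -!EFinB lee_fin dotvDl; lra.
apply: le_trans (leeD2r (dotv x0 y - t0)%:E h) _.
by rewrite -addeA -EFinD addNr adde0.
Qed.

Lemma dc_transl u v x0 t0 l : proper_fun u -> proper_fun v ->
  delta_cond u v l <-> delta_cond (transl u x0 t0) (transl v x0 t0) l.
Proof.
move=> pu pv; rewrite /delta_cond.
have E y : (forall a b : \bar R, (a + (dotv x0 y - t0)%:E <= b + (dotv x0 y - t0)%:E + l%:E)
    = (a <= b + l%:E))%E.
  by move=> a b; rewrite addeAC leeD2rE.
split => H y hy; have [h1 h2] := H y hy; rewrite ?conj_transl // ?E in h1 h2 *; by split.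
Qed.

End Main.

Unset Implicit Arguments.
Local Close Scope classical_set_scope.

Theorem lemma5p11 (R : realType) (n : nat) :
  (* finiteness: the defining set of delta is nonempty *)
  (forall u v : 'rV[R]_n -> \bar R, Conv_coe u -> Conv_coe v ->
     exists l : R, 0 < l /\ delta_cond u v l) /\
  (* nonnegativity *)
  (forall u v : 'rV[R]_n -> \bar R, Conv_coe u -> Conv_coe v ->
     0 <= delta u v) /\
  (* identity of indiscernibles *)
  (forall u v : 'rV[R]_n -> \bar R, Conv_coe u -> Conv_coe v ->
     (delta u v = 0 <-> u = v)) /\
  (* symmetry *)
  (forall u v : 'rV[R]_n -> \bar R, Conv_coe u -> Conv_coe v ->
     delta u v = delta v u) /\
  (* triangle inequality *)
  (forall u v w : 'rV[R]_n -> \bar R, Conv_coe u -> Conv_coe v -> Conv_coe w ->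
     delta u w <= delta u v + delta v w) /\
  (* invariance under translations and vertical shifts *)
  (forall (u v : 'rV[R]_n -> \bar R) (x0 : 'rV[R]_n) (t0 : R),
     Conv_coe u -> Conv_coe v ->
     delta u v = delta (transl u x0 t0) (transl v x0 t0)).
Proof.
have lb0 : forall u v : 'rV[R]_n -> \bar R,
    lbound [set l : R | 0 < l /\ delta_cond u v l]%classic 0.
  by move=> u v e [ep _]; apply: ltW.
split; first exact: finiteness.
split.
  move=> u v hu hv; apply: lb_le_inf; last exact: lb0.
  by have [l hl] := finiteness hu hv; exists l.
split.
  move=> u v hu hv; split.
    move=> d0; apply: boolp.funext => x0; apply/eqP; rewrite eq_le; apply/andP; split.
      by rewrite leNgt; apply/negP => h; apply: (not_lt hu hv (all_dc hu hv d0)) h.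
    rewrite leNgt; apply/negP => h.
    apply: (not_lt hv hu _) h => l lp; apply: dc_sym; exact: all_dc hu hv d0 l lp.
  move=> <-.
  set E := [set l : R | 0 < l /\ delta_cond u u l]%classic.
  have EE : forall l : R, 0 < l -> E l.
    by move=> l lp; split => // y _; split; apply: leeDl; rewrite lee_fin ltW.
  apply/le_anti/andP; split; last by apply: lb_le_inf; [exists 1; apply: EE | exact: lb0].
  rewrite leNgt; apply/negP => ip.
  have := ge_inf (ex_intro _ 0 (lb0 u u)) (EE _ (divr_gt0 ip (ltr0Sn _ 1))).
  rewrite /delta -/E; lra.
split.
  move=> u v hu hv; rewrite /delta; congr inf; apply/funext => l; apply/propext.
  by split => -[lp H]; split => //; apply: dc_sym.
split.
  move=> u v w hu hv hw.
  have [a ha] := finiteness hu hv; have [b hb] := finiteness hv hw.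
  rewrite -[delta u v]mul1r -[delta v w]mul1r.
  apply: inf_comb; [by exists a | by exists b | by [] | by [] |].
  move=> a' b' [ap Ha] [bp Hb]; rewrite !mul1r.
  apply: (ge_inf (ex_intro _ 0 (lb0 u w))); split; first exact: addr_gt0.
  exact: dc_trans Ha Hb.
move=> u v x0 t0 hu hv; rewrite /delta; congr inf; apply/funext => l; apply/propext.
have HH := dc_transl x0 t0 l hu.1 hv.1.
by split => -[lp H1]; split => //; apply/HH.


Qed.
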